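(* Let $K\in{\rm Alg}(V)$ be a quaternion algebra or an octonion algebra over a field $F$ and let $f,g\in{\rm Gl}(V)$. Then $K^{(f,g)}\cong K^{(af,bg)}$ for all $a,b\in F^\times$.
   Context: $V$ is a finite-dimensional $F$-vector space and ${\rm Alg}(V)$ the set of $F$-bilinear multiplications on $V$. For $f,g\in{\rm End}_F(V)$, $K^{(f,g)}$ is $V$ with product $x\cdot y=f(x)g(y)$ (product of $K$). *)

(* Defs.v *)
From HB Require Import structures.
From mathcomp Require Import all_boot all_order all_algebra.
Set Implicit Arguments. Unset Strict Implicit. Unset Printing Implicit Defensive.
Import GRing.Theory.
Local Open Scope ring_scope.

(* V : a finite-dimensional F-vector space (vectType F).
   An element of Alg(V) is an F-bilinear multiplication on V. *)
Definition bilinear_mul (F : fieldType) (V : vectType F) (m : V -> V -> V) :=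
  (forall x, linear (m x)) /\ (forall y, linear (fun x => m x y)).

Definition is_GL (F : fieldType) (V : vectType F) (f : V -> V) :=
  linear f /\ bijective f.

(* K^(f,g) : same space, product x.y = f(x) g(y). *)
Definition twist (F : fieldType) (V : vectType F) (m : V -> V -> V)
  (f g : V -> V) : V -> V -> V := fun x y => m (f x) (g y).

Definition alg_iso (F : fieldType) (V : vectType F) (m1 m2 : V -> V -> V) :=
  exists h : V -> V, [/\ linear h, bijective h &
                         forall x y, h (m1 x y) = m2 (h x) (h y)].

(* Composition algebra (Springer--Veldkamp): a unital algebra carrying a
   quadratic form N with nondegenerate polar form, N(xy) = N(x) N(y). *)
Definition quadratic_form (F : fieldType) (V : vectType F) (N : V -> F) :=
  (forall (a : F) x, N (a *: x) = a ^+ 2 * N x) /\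
  (forall x (a : F) y z,
     N (x + (a *: y + z)) - N x - N (a *: y + z)
     = a * (N (x + y) - N x - N y) + (N (x + z) - N x - N z)).

Definition composition_algebra (F : fieldType) (V : vectType F)
  (m : V -> V -> V) :=
  bilinear_mul m /\
  (exists e : V, forall x, m e x = x /\ m x e = x) /\
  exists N : V -> F,
    [/\ quadratic_form N,
        (forall x, (forall y, N (x + y) - N x - N y = 0) -> x = 0) &
        forall x y, N (m x y) = N x * N y].

Definition quaternion_algebra (F : fieldType) (V : vectType F) (m : V -> V -> V) :=
  composition_algebra m /\ \dim (fullv : {vspace V}) = 4%N.

Definition octonion_algebra (F : fieldType) (V : vectType F) (m : V -> V -> V) :=
  composition_algebra m /\ \dim (fullv : {vspace V}) = 8%N.

(* Main.v *)
Require Import Defs.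
From mathcomp Require Import all_boot all_order all_algebra.
Local Open Scope ring_scope.
From mathcomp Require Import ring.
Import GRing.Theory.

Lemma lin0 (F : fieldType) (V W : lmodType F) (L : V -> W) :
  linear L -> L 0 = 0.
Proof.
move=> HL; have := HL 1 0 0; rewrite scale1r addr0 => H.
rewrite scale1r in H.
by apply: (addrI (L 0)); rewrite addr0 -H.
Qed.

Lemma linZ' (F : fieldType) (V W : lmodType F) (L : V -> W) c x :
  linear L -> L (c *: x) = c *: L x.
Proof.
move=> HL; have := HL c x 0; rewrite !addr0 => ->.
by rewrite lin0 // addr0.
Qed.

Arguments linZ' {F V W L} c x.

Theorem corollary1p14 (F : fieldType) (V : vectType F) (m : V -> V -> V)
  (f g : V -> V) (a b : F) :
  quaternion_algebra m \/ octonion_algebra m ->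
  is_GL f -> is_GL g ->
  a != 0 -> b != 0 ->
  alg_iso (twist m f g) (twist m (fun x => a *: f x) (fun x => b *: g x)).
Proof.
move=> HK [Lf _] [Lg _] a0 b0.
have [Hl Hr] : bilinear_mul m.
  by case: HK => [[[Hm _] _]|[[Hm _] _]].
have ab0 : a * b != 0 by rewrite mulf_neq0.
exists (fun x => (a * b)^-1 *: x); split.
- by move=> c u v; rewrite scalerDr !scalerA mulrC.
- exists (fun x => (a * b) *: x) => x; rewrite scalerA.
    by rewrite mulrV ?unitfE // scale1r.
  by rewrite mulVr ?unitfE // scale1r.
- move=> x y; rewrite /twist.
  rewrite (linZ' _ _ Lf) (linZ' _ _ Lg).
  rewrite (linZ' _ _ (Hl _)) (linZ' _ _ (Hr _)).
  rewrite (linZ' _ _ (Hl _)) (linZ' _ _ (Hr _)).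
  rewrite !scalerA; congr (_ *: _).
  by rewrite [b * a]mulrC divff // mul1r.
Qed.
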